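(* Let $p\ge1$ be an integer and let $\bm U:[0,T]\to\mathbb V_h$ be a differentiable solution of the semi-discrete system $$(\bm I+\mathbb A^2)\frac{d}{dt}\bm U+\mathbb D(\bm U)\bm U=0.$$ Then $P(t)=\|\bm U(t)\|_h^2+|\bm U(t)|_{2,h}^2$ satisfies $P(t)=P(0)$ for all $t\in[0,T]$.
   Context: $\Omega=[x_L,x_R]\times[y_L,y_R]$, $l_1=x_R-x_L$, $l_2=y_R-y_L$, $N_1,N_2$ even, $h_r=l_r/N_r$, grid points $x_{j_1}=x_L+j_1h_1$, $y_{j_2}=y_L+j_2h_2$, $0\le j_r\le N_r-1$. $\mathbb V_h$: doubly periodic grid functions identified with vectors $\bm U=(U_{0,0},U_{1,0},\dots,U_{N_1-1,0},U_{0,1},\dots,U_{N_1-1,N_2-1})^T$. $\langle\bm U,\bm V\rangle_h=h_1h_2\sum U_{j_1,j_2}V_{j_1,j_2}$, $\|\bm U\|_h^2=\langle\bm U,\bm U\rangle_h$. With $\mu_r=2\pi/l_r$, $g^{(1)}_k(x)=\frac1{N_1}\sum_{l=-N_1/2}^{N_1/2}\frac1{a_l}e^{\mathrm il\mu_1(x-x_k)}$, $a_l=1$ for $|l|<N_1/2$, $a_{\pm N_1/2}=2$ (similarly $g^{(2)}_k(y)$), $\bm D_s^x=(\frac{d^s}{dx^s}g^{(1)}_k(x_j))_{j,k=0}^{N_1-1}$, $\bm D_s^y=(\frac{d^s}{dy^s}g^{(2)}_k(y_j))_{j,k=0}^{N_2-1}$. $\mathbb A=\bm I_{N_2}\otimes\bm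 D_2^x+\bm D_2^y\otimes\bm I_{N_1}$, $\mathbb B=\bm I_{N_2}\otimes\bm D_3^x+\bm D_2^y\otimes\bm D_1^x$, $\mathbb L_h=\bm I_{N_2}\otimes\bm D_1^x+\bm D_1^y\otimes\bm I_{N_1}$ ($\otimes$ Kronecker product), $\mathbb D(\bm W)=\mathbb B+\mathbb L_h+\frac1{p+2}(\mathrm{diag}(\bm W^p)\mathbb L_h+\mathbb L_h\mathrm{diag}(\bm W^p))$ with $\bm W^p$ the componentwise power; $|\bm U|_{2,h}=\|\mathbb A\bm U\|_h$. This system is the Fourier pseudo-spectral semi-discretization of the GR-KdV equation $u_t+\Delta^2u_t+\Delta u_x+(1+u^p)(u_x+u_y)=0$ with periodic boundary conditions. *)

(* Defs.v *)
From mathcomp Require Import all_boot all_order all_algebra.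
From mathcomp Require Import all_classical all_reals all_analysis.
From mathcomp.real_closed Require Export mxtens.

Unset Implicit Arguments.
Unset Strict Implicit.
Unset Printing Implicit Defensive.

Import Order.TTheory GRing.Theory Num.Theory.
Local Open Scope ring_scope.

Section GRKdV.
Variable R : realType.

(* a_l for l = i - N/2, i = 0..N : a_{+-N/2} = 2, otherwise 1 *)
Definition acoef (N : nat) (i : nat) : R :=
  if (i == 0)%N || (i == N)%N then 2 else 1.

Definition gstep (len : R) (N : nat) : R := len / N%:R.
Definition gpt (xL len : R) (N : nat) (j : nat) : R := xL + j%:R * gstep len N.

(* Trigonometric interpolation basis function
   g_k(x) = 1/N sum_{l=-N/2}^{N/2} (1/a_l) e^{i l mu (x - x_k)},  mu = 2 pi / len.
   The sum is symmetric in l (a_l = a_{-l}), so the sine parts cancel and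
   g_k(x) = 1/N sum_{l=-N/2}^{N/2} (1/a_l) cos(l mu (x - x_k)); we index
   l = i - N/2 with i = 0..N. *)
Definition gbasis (xL len : R) (N : nat) (k : nat) (x : R) : R :=
  N%:R^-1 * \sum_(i < N.+1)
     (acoef N i)^-1 * cos ((i%:R - (N./2)%:R) * (2 * pi / len)
                            * (x - gpt xL len N k)).

Definition Dmat (s : nat) (xL len : R) (N : nat) : 'M[R]_N :=
  \matrix_(j < N, k < N) derive1n s (gbasis xL len N k) (gpt xL len N j).

(* Grid vectors: U = (U_{0,0},...,U_{N1-1,0},U_{0,1},...), index j2*N1 + j1;
   this is the index convention of the Kronecker product tensmx (A *t B). *)
Definition gvec (N1 N2 : nat) := 'cV[R]_(N2 * N1).

Definition Amat (xL xR yL yR : R) (N1 N2 : nat) : 'M[R]_(N2 * N1) :=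
  tensmx (1%:M : 'M[R]_N2) (Dmat 2 xL (xR - xL) N1)
  + tensmx (Dmat 2 yL (yR - yL) N2) (1%:M : 'M[R]_N1).

Definition Bmat (xL xR yL yR : R) (N1 N2 : nat) : 'M[R]_(N2 * N1) :=
  tensmx (1%:M : 'M[R]_N2) (Dmat 3 xL (xR - xL) N1)
  + tensmx (Dmat 2 yL (yR - yL) N2) (Dmat 1 xL (xR - xL) N1).

Definition Lmat (xL xR yL yR : R) (N1 N2 : nat) : 'M[R]_(N2 * N1) :=
  tensmx (1%:M : 'M[R]_N2) (Dmat 1 xL (xR - xL) N1)
  + tensmx (Dmat 1 yL (yR - yL) N2) (1%:M : 'M[R]_N1).

Definition diagpow (n p : nat) (W : 'cV[R]_n) : 'M[R]_n :=
  diag_mx (\row_i (W i ord0 ^+ p)).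

Definition Dnl (xL xR yL yR : R) (N1 N2 p : nat) (W : 'cV[R]_(N2 * N1))
  : 'M[R]_(N2 * N1) :=
  Bmat xL xR yL yR N1 N2 + Lmat xL xR yL yR N1 N2
  + (p.+2%:R)^-1 *: (diagpow _ p W *m Lmat xL xR yL yR N1 N2
                     + Lmat xL xR yL yR N1 N2 *m diagpow _ p W).

Definition inner_h (h1 h2 : R) (n : nat) (U V : 'cV[R]_n) : R :=
  h1 * h2 * \sum_(i < n) U i ord0 * V i ord0.
Definition normh2 (h1 h2 : R) (n : nat) (U : 'cV[R]_n) : R := inner_h h1 h2 n U U.

(* P = ||U||_h^2 + |U|_{2,h}^2, with |U|_{2,h} = ||A U||_h *)
Definition Pener (xL xR yL yR : R) (N1 N2 : nat) (U : 'cV[R]_(N2 * N1)) : R :=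
  let h1 := gstep (xR - xL) N1 in let h2 := gstep (yR - yL) N2 in
  normh2 h1 h2 _ U + normh2 h1 h2 _ (Amat xL xR yL yR N1 N2 *m U).

End GRKdV.

Arguments acoef {R} N i.
Arguments gstep {R} len N.
Arguments gpt {R} xL len N j.
Arguments gbasis {R} xL len N k x.
Arguments Dmat {R} s xL len N.
Arguments Amat {R} xL xR yL yR N1 N2.
Arguments Bmat {R} xL xR yL yR N1 N2.
Arguments Lmat {R} xL xR yL yR N1 N2.
Arguments diagpow {R} n p W.
Arguments Dnl {R} xL xR yL yR N1 N2 p W.
Arguments inner_h {R} h1 h2 n U V.
Arguments normh2 {R} h1 h2 n U.
Arguments Pener {R} xL xR yL yR N1 N2 U.

(* Main.v *)
Require Import Defs.
From mathcomp Require Import all_boot all_order all_algebra.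
From mathcomp Require Import all_classical all_reals all_analysis.
From mathcomp.real_closed Require Import mxtens.
From mathcomp Require Import ring lra.
Import Order.TTheory GRing.Theory Num.Theory numFieldTopology.Exports numFieldNormedType.Exports.
Local Open Scope ring_scope.
Local Open Scope classical_set_scope.
Section S.
Variable R : realType.
Lemma is_derive_cosaff (w c e x : R) : is_derive x 1 (fun y => cos (w * (y - c) + e)) (w * cos (w * (x - c) + e + pi/2)).
Proof.
have h : is_derive x 1 (fun y => w * (y - c) + e) w.
  have := @is_deriveD R R R (fun y => w * (y - c)) (cst e) x 1 w 0.
  rewrite addr0; apply => //.
  have := @is_deriveZ R R R (fun y => y - c) w x 1 1.
  rewrite /GRing.scale /= mulr1; apply.
  have := @is_deriveB R R R id (cst c) x 1 1 0. rewrite subr0; apply => //.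
have := is_derive1_comp (is_derive_cos _) h.
by rewrite cosDpihalf mulrC.
Qed.

Definition om (len : R) N (i : nat) : R := (i%:R - (N./2)%:R) * (2 * pi / len).
Definition Fs (xL len : R) N k s (x : R) : R :=
  N%:R^-1 * \sum_(i < N.+1) (acoef N i)^-1 *
     (om len N i ^+ s * cos (om len N i * (x - gpt xL len N k) + s%:R * (pi/2))).

Lemma is_derive_Fs (xL len : R) N k s (x : R) : is_derive x 1 (Fs xL len N k s) (Fs xL len N k s.+1 x).
Proof.
rewrite /Fs.
set c := gpt xL len N k.
pose h (i : 'I_N.+1) := fun y : R => (acoef N i)^-1 *
     (om len N i ^+ s * cos (om len N i * (y - c) + s%:R * (pi/2))).
have Hh : forall i, is_derive x 1 (h i) ((acoef N i)^-1 *
     (om len N i ^+ s.+1 * cos (om len N i * (x - c) + s.+1%:R * (pi/2)))).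
  move=> i; rewrite /h.
  have := @is_deriveZ R R R _ ((acoef N i)^-1) x 1 _
    (@is_deriveZ R R R _ (om len N i ^+ s) x 1 _ (is_derive_cosaff (om len N i) c (s%:R * (pi/2)) x)).
  move=> H; apply: (is_derive_eq H).
  rewrite /GRing.scale /=; set w := om len N i.
  rewrite exprSr -(mulrA (w ^+ s)); congr (_ * (_ * (_ * cos _))).
  by rewrite -addrA; set q := pi / 2; rewrite -natr1 mulrDl mul1r.
have := is_deriveZ (N%:R^-1) (is_derive_sum Hh).
rewrite fct_sumE /GRing.scale /=; apply.
Qed.

Lemma derive_gbasis s (xL len : R) N k : derive1n s (gbasis xL len N k) = Fs xL len N k s.
Proof.
elim: s => [|s IH].
  rewrite derive1n0; apply/funext => x; rewrite /gbasis /Fs; congr (_ * _).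
  by apply: eq_bigr => i _; rewrite expr0 mul1r mul0r addr0.
rewrite derive1nS IH; apply/funext => x.
have H := is_derive_Fs xL len N k s x; rewrite derive1E; exact: derive_val.
Qed.
Lemma cos_subnpi (y : R) s : cos (y - s%:R * pi) = (-1) ^+ s * cos y.
Proof.
elim: s => [|s IH]; first by rewrite mul0r subr0 expr0 mul1r.
have -> : y - s.+1%:R * pi = (y - s%:R * pi) - pi.
  by rewrite -natr1 mulrDl mul1r opprD addrA.
have h := cosDpi (y - s%:R * pi - pi); rewrite subrK in h.
by rewrite IH in h; rewrite exprS -mulrA h mulN1r opprK.
Qed.

Lemma cos_refl (th : R) s :
  cos (- th + s%:R * (pi / 2)) = (-1) ^+ s * cos (th + s%:R * (pi / 2)).
Proof.
rewrite -cosN opprD opprK -cos_subnpi; congr cos.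
rewrite -addrA; congr (_ + _).
set p2 := pi / 2.
have -> : pi = p2 + p2 :> R by rewrite /p2 -splitr.
ring.
Qed.

Lemma Dmat_tr s (xL len : R) N : (Dmat s xL len N)^T = (-1)^+s *: Dmat s xL len N.
Proof.
apply/matrixP => j k; rewrite !mxE !derive_gbasis /Fs.
rewrite [RHS]mulrCA; congr (_ * _); rewrite mulr_sumr; apply: eq_bigr => i _.
rewrite -[gpt _ _ _ k - _]opprB mulrN cos_refl.
set a := (-1) ^+ s; set b := cos _; set c := om _ _ _ ^+ _; set d := (acoef _ _)^-1; ring.
Qed.

Lemma tensNmx m n p q (A : 'M[R]_(m,n)) (B : 'M[R]_(p,q)) : (-A) *t B = -(A *t B).
Proof. by apply/matrixP => i j; rewrite !mxE mulNr. Qed.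
Lemma tensmxN m n p q (A : 'M[R]_(m,n)) (B : 'M[R]_(p,q)) : A *t (-B) = -(A *t B).
Proof. by apply/matrixP => i j; rewrite !mxE mulrN. Qed.

Lemma Dmat_tr2 (xL len : R) N : (Dmat 2 xL len N)^T = Dmat 2 xL len N.
Proof. by rewrite Dmat_tr sqrrN expr1n scale1r. Qed.
Lemma Dmat_tr1 (xL len : R) N : (Dmat 1 xL len N)^T = - Dmat 1 xL len N.
Proof. by rewrite Dmat_tr expr1 scaleN1r. Qed.
Lemma Dmat_tr3 (xL len : R) N : (Dmat 3 xL len N)^T = - Dmat 3 xL len N.
Proof. have e : (-1) ^+ 3 = -1 :> R by rewrite !exprS expr0 !mulN1r opprK.
by rewrite Dmat_tr e scaleN1r. Qed.

Lemma Amat_tr (xL xR yL yR : R) N1 N2 : (Amat xL xR yL yR N1 N2)^T = Amat xL xR yL yR N1 N2.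
Proof. by rewrite /Amat linearD /= !trmx_tens !trmx1 (Dmat_tr2 xL (xR - xL) N1) (Dmat_tr2 yL (yR - yL) N2). Qed.
Lemma Bmat_tr (xL xR yL yR : R) N1 N2 : (Bmat xL xR yL yR N1 N2)^T = - Bmat xL xR yL yR N1 N2.
Proof.
rewrite /Bmat linearD /= !trmx_tens !trmx1 (Dmat_tr3 xL (xR - xL) N1) (Dmat_tr2 yL (yR - yL) N2) (Dmat_tr1 xL (xR - xL) N1).
by rewrite tensmxN tensmxN opprD.
Qed.
Lemma Lmat_tr (xL xR yL yR : R) N1 N2 : (Lmat xL xR yL yR N1 N2)^T = - Lmat xL xR yL yR N1 N2.
Proof.
rewrite /Lmat linearD /= !trmx_tens !trmx1 (Dmat_tr1 xL (xR - xL) N1) (Dmat_tr1 yL (yR - yL) N2).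
by rewrite tensmxN tensNmx opprD.
Qed.
Lemma Dnl_tr (xL xR yL yR : R) N1 N2 p W :
  (Dnl xL xR yL yR N1 N2 p W)^T = - Dnl xL xR yL yR N1 N2 p W.
Proof.
have trD : forall (A B : 'M[R]_(N2 * N1)), (A + B)^T = A^T + B^T by move=> *; exact: linearD.
have trZ : forall c (A : 'M[R]_(N2 * N1)), (c *: A)^T = c *: A^T by move=> *; exact: linearZ.
rewrite /Dnl; have := Bmat_tr xL xR yL yR N1 N2; have := Lmat_tr xL xR yL yR N1 N2.
set B := Bmat _ _ _ _ _ _; set L := Lmat _ _ _ _ _ _; set P := diagpow _ _ _ => hL hB.
have hP : P^T = P by rewrite /P /diagpow tr_diag_mx.
rewrite (trD (B + L)) (trD B L) trZ (trD (P *m L)) !trmx_mul hL hB hP mulmxN mulNmx.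
by rewrite -(opprD (L *m P)) scalerN -!opprD [L *m P + _]addrC.
Qed.

Lemma skew_quad n (S : 'M[R]_n) (u : 'cV[R]_n) : S^T = -S -> u^T *m S *m u = 0.
Proof.
move=> hS.
have h : (u^T *m S *m u)^T = - (u^T *m S *m u).
  by rewrite !trmx_mul trmxK hS mulNmx mulmxN mulmxA.
apply/matrixP => i j; rewrite [i]ord1 [j]ord1 mxE.
have := congr1 (fun M : 'M[R]_1 => M 0 0) h; rewrite /= !mxE => e.
lra.
Qed.

Lemma entry_cont m n (i : 'I_m) (j : 'I_n) : continuous (fun M : 'M[R]_(m, n) => M i j).
Proof.
move=> u A /nbhs_ballP[e /= e0 eA].
apply/nbhs_ballP; exists e => //= v [_ uv]; apply: eA.
exact: uv.
Qed.

Lemma sum_cont (T : topologicalType) n (F : 'I_n -> T -> R) x :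
  (forall i, {for x, continuous (F i)}) -> {for x, continuous (fun y => \sum_(i < n) F i y)}.
Proof.
move=> hF; rewrite -fct_sumE.
apply: (big_ind (fun g : T -> R => {for x, continuous g})) => //.
- exact: cvg_cst.
- by move=> f g hf hg; apply: continuousD.
Qed.

Lemma contD' (T : topologicalType) (f g : T -> R) x :
  {for x, continuous f} -> {for x, continuous g} -> {for x, continuous (fun y => f y + g y)}.
Proof. exact: continuousD. Qed.
Lemma contM' (T : topologicalType) (f g : T -> R) x :
  {for x, continuous f} -> {for x, continuous g} -> {for x, continuous (fun y => f y * g y)}.
Proof. exact: continuousM. Qed.

Lemma Pener_cont (xL xR yL yR : R) N1 N2 : continuous (Pener xL xR yL yR N1 N2).
Proof.
move=> M; rewrite /Pener /normh2 /inner_h.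
have hA : forall i, {for M, continuous (fun M0 : 'M[R]_(N2 * N1, 1) => (Amat xL xR yL yR N1 N2 *m M0) i ord0)}.
  move=> i; have -> : (fun M0 : 'M[R]_(N2 * N1, 1) => (Amat xL xR yL yR N1 N2 *m M0) i ord0) =
     (fun M0 => \sum_k Amat xL xR yL yR N1 N2 i k * M0 k ord0) by apply/funext => M0; rewrite mxE.
  apply: sum_cont => k; apply: continuousM; first exact: cst_continuous.
  exact: (entry_cont _ _ k ord0 M).
apply: (@contD' 'cV[R]_(N2 * N1)); apply: (@contM' 'cV[R]_(N2 * N1)); try exact: cst_continuous.
  by apply: sum_cont => i; apply: contM'; apply: (entry_cont _ _ i ord0 M).
by apply: sum_cont => i; apply: contM'; apply: hA.
Qed.

Lemma U_entry n (U : R -> 'cV[R]_n) (t : R) : derivable U t 1 ->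
  forall i, is_derive t 1 (fun s => U s i ord0) ((derive1 U t) i ord0).
Proof.
move=> dU i; rewrite derive1E (derive_mx dU) mxE.
apply: derivableP; exact: ((derivable_mxP U t 1).1 dU i ord0).
Qed.

Lemma is_derive_sq n (X : R -> 'cV[R]_n) (t : R) (dX : 'cV[R]_n) :
  (forall i, is_derive t 1 (fun s => X s i ord0) (dX i ord0)) ->
  is_derive t 1 (fun s => \sum_i X s i ord0 * X s i ord0)
     (\sum_i (X t i ord0 * dX i ord0 + X t i ord0 * dX i ord0)).
Proof.
move=> h.
have := is_derive_sum (fun i => is_deriveM (h i) (h i)).
by rewrite fct_sumE; apply.
Qed.

Lemma is_derive_Amx n (A : 'M[R]_n) (X : R -> 'cV[R]_n) (t : R) (dX : 'cV[R]_n) :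
  (forall i, is_derive t 1 (fun s => X s i ord0) (dX i ord0)) ->
  forall i, is_derive t 1 (fun s => (A *m X s) i ord0) ((A *m dX) i ord0).
Proof.
move=> h i.
have -> : (fun s => (A *m X s) i ord0) = (fun s => \sum_k A i k * X s k ord0).
  by apply/funext => s; rewrite mxE.
rewrite mxE.
have := is_derive_sum (fun k => is_deriveZ (A i k) (h k)).
by rewrite fct_sumE; apply.
Qed.

Lemma dot2 n (X Y : 'cV[R]_n) :
  \sum_i (X i ord0 * Y i ord0 + X i ord0 * Y i ord0) = 2 * (X^T *m Y) ord0 ord0.
Proof.
rewrite big_split /= mxE.
under [X in _ = 2 * X]eq_bigr do rewrite mxE.
by rewrite -mulr2n mulr_natl.
Qed.
End S.

Theorem lemma2p6 (R : realType) (xL xR yL yR : R) (N1 N2 p : nat) (T : R)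
  (U : R -> 'cV[R]_(N2 * N1)) :
  xL < xR -> yL < yR ->
  (0 < N1)%N -> ~~ odd N1 -> (0 < N2)%N -> ~~ odd N2 ->
  (1 <= p)%N ->
  {within `[0, T], continuous U} ->
  (forall t, t \in `]0, T[ ->
     derivable U t 1 /\
     (1%:M + Amat xL xR yL yR N1 N2 ^+ 2) *m (derive1 U t)
       + Dnl xL xR yL yR N1 N2 p (U t) *m U t = 0) ->
  forall t, t \in `[0, T] ->
    Pener xL xR yL yR N1 N2 (U t) = Pener xL xR yL yR N1 N2 (U 0).
Proof.
move=> _ _ _ _ _ _ _ hcont hder t ht.
have [t0 tT] : 0 <= t /\ t <= T by move: ht; rewrite inE /= in_itv /= => /andP.
set A := Amat xL xR yL yR N1 N2.
have hd : forall s, s \in `]0, t[%R ->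
    is_derive s 1 (Pener xL xR yL yR N1 N2 \o U) ((fun _ => 0 : R) s).
  move=> s hs.
  have hsT : s \in `]0, T[.
    move: hs; rewrite in_itv /= => /andP[h1 h2]; rewrite inE /= in_itv /= h1 /=; exact: (lt_le_trans h2 tT).
  have [dU eq] := hder s hsT.
  set V := derive1 U s in eq.
  have eU := @U_entry _ _ _ _ dU.
  have eAU := @is_derive_Amx _ _ A _ _ _ eU.
  set c := gstep (xR - xL) N1 * gstep (yR - yL) N2.
  have H := is_deriveD (is_deriveZ c (@is_derive_sq _ _ _ _ _ eU))
                       (is_deriveZ c (@is_derive_sq _ _ (fun s => A *m U s) _ _ eAU)).
  rewrite /Pener /normh2 /inner_h /=.
  apply: (is_derive_eq H).
  rewrite /GRing.scale /= !dot2 -/V.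
  have key : (U s)^T *m V + (A *m U s)^T *m (A *m V) = 0.
    have -> : (U s)^T *m V + (A *m U s)^T *m (A *m V) = (U s)^T *m ((1%:M + A ^+ 2) *m V).
      rewrite mulmxDl mul1mx mulmxDr trmx_mul Amat_tr expr2 -mulmxE !mulmxA.
      by [].
    move/eqP: eq; rewrite addr_eq0 => /eqP ->.
    rewrite mulmxN mulmxA skew_quad ?oppr0 //.
    exact: Dnl_tr.
  have := congr1 (fun M : 'M[R]_1 => M ord0 ord0) key; rewrite /= !mxE => e.
  by rewrite -mulrDr -mulrDr e !mulr0.
have hPc : {within `[0, t], continuous (Pener xL xR yL yR N1 N2 \o U)}.
  apply: (@continuous_subspaceW _ _ _ `[0, T]).
    by apply: subset_itv => //; rewrite bnd_simp.
  move=> x; exact: (continuous_comp (hcont x) (Pener_cont _ _ _ _ _ _ _ (U x))).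
have [x _] := MVT_segment t0 hd hPc.
by move/eqP; rewrite mul0r subr_eq0 => /eqP.
Qed.
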